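(* Let $I\subset\mathbb{R}$ be an open interval and let $f:I\to\mathbb{R}$ be a strictly convex function of class $C^{3}$ (i.e. $f''>0$ on $I$), with graph $X$. Then $f$ is a quadratic polynomial if and only if $X$ satisfies the following Condition (A): there is a positive constant $a$, depending only on $X$, such that for every point $P$ on $X$ and every chord $AB$ of $X$ parallel to the tangent line of $X$ at $P$, if $V$ denotes the point where the line through $P$ parallel to the $y$-axis meets the segment $AB$, then the area of the region bounded by $X$ and the chord $AB$ equals $a\,|PV|^{3/2}$.
   Context: A chord $AB$ of $X$ is a segment joining two points $A,B$ of $X$; the ''region bounded by $X$ and $AB$'' is the region enclosed by the arc of $X$ between $A$ and $B$ and the segment $AB$. $|PV|$ denotes the Euclidean length of the segment $PV$. *)

(* Defs.v *)
From Stdlib Require Import Reals.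
From Coquelicot Require Import Coquelicot.
Open Scope R_scope.

Definition in_open_interval (lo hi : Rbar) (x : R) : Prop :=
  Rbar_lt lo x /\ Rbar_lt x hi.

Definition C3_on (I : R -> Prop) (f : R -> R) : Prop :=
  (forall k, (k <= 3)%nat -> forall x, I x -> ex_derive_n f k x) /\
  (forall x, I x -> continuous (Derive_n f 3) x).

Definition chord (f : R -> R) (x1 x2 x : R) : R :=
  f x1 + (f x2 - f x1) / (x2 - x1) * (x - x1).

Definition segment_area (f : R -> R) (x1 x2 : R) : R :=
  RInt (fun x => Rabs (chord f x1 x2 x - f x)) x1 x2.

(* Condition (A) for the graph X of f over I. P = (p, f p), V = (p, chord p),
   |PV| = |chord p - f p|, and |PV|^(3/2) = sqrt (|PV|^3). *)
Definition conditionA (I : R -> Prop) (f : R -> R) : Prop :=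
  exists a : R, 0 < a /\
    forall p x1 x2 : R,
      I p -> I x1 -> I x2 -> x1 < x2 ->
      f x2 - f x1 = Derive f p * (x2 - x1) ->
      (* the vertical line through P meets the segment AB *)
      x1 <= p <= x2 ->
      segment_area f x1 x2 = a * sqrt (Rabs (chord f x1 x2 p - f p) ^ 3).

Definition quadratic_on (I : R -> Prop) (f : R -> R) : Prop :=
  exists c2 c1 c0 : R, forall x, I x -> f x = c2 * x ^ 2 + c1 * x + c0.

(* Main.v *)
Require Import Defs.
From Stdlib Require Import Reals Lra Psatz Classical.
From Coquelicot Require Import Coquelicot.
Open Scope R_scope.

Lemma I_open lo hi x : in_open_interval lo hi x ->
  exists d, 0 < d /\ forall y, Rabs (y - x) < d -> in_open_interval lo hi y.
Proof.
  unfold in_open_interval.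
  destruct lo as [l| |]; destruct hi as [h| |]; simpl; intros [H1 H2]; try contradiction.
  - exists (Rmin (x - l) (h - x)); split; [apply Rmin_pos; lra|].
    intros y Hy; apply Rabs_def2 in Hy; pose proof (Rmin_l (x-l) (h-x));
    pose proof (Rmin_r (x-l) (h-x)); lra.
  - exists (x - l); split; [lra|]. intros y Hy; apply Rabs_def2 in Hy; lra.
  - exists (h - x); split; [lra|]. intros y Hy; apply Rabs_def2 in Hy; lra.
  - exists 1; split; [lra|]. intros y Hy; lra.
Qed.

Lemma I_conv lo hi a b y : in_open_interval lo hi a -> in_open_interval lo hi b ->
  a <= y <= b -> in_open_interval lo hi y.
Proof.
  unfold in_open_interval.
  destruct lo as [l| |]; destruct hi as [h| |]; simpl; intros; try tauto; lra.
Qed.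

Lemma cont_pt_of_ex (f : R -> R) x : ex_derive f x -> continuity_pt f x.
Proof. intros H; apply continuity_pt_filterlim; apply (ex_derive_continuous f x H). Qed.

Lemma mvt (f : R -> R) a b : a < b -> (forall x, a <= x <= b -> ex_derive f x) ->
  exists c, a <= c <= b /\ f b - f a = Derive f c * (b - a).
Proof.
  intros Hab Hd.
  destruct (MVT_gen f a b (Derive f)) as [c [Hc Heq]].
  - intros x Hx. rewrite Rmin_left in Hx by lra. rewrite Rmax_right in Hx by lra.
    apply Derive_correct, Hd; lra.
  - intros x Hx. rewrite Rmin_left in Hx by lra. rewrite Rmax_right in Hx by lra.
    apply cont_pt_of_ex, Hd; lra.
  - rewrite Rmin_left in Hc by lra. rewrite Rmax_right in Hc by lra.
    exists c; auto.
Qed.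

Lemma taylor2 (f : R -> R) q x k :
  (forall y, Rmin q x <= y <= Rmax q x -> ex_derive f y /\ ex_derive (Derive f) y) ->
  exists d, Rmin q x <= d <= Rmax q x /\ exists w, 0 <= w /\
    f x - f q - Derive f q * (x - q) - k * (x - q)^2 = (Derive (Derive f) d - 2*k) * w.
Proof.
  intros Hd.
  set (h := fun y => f y - f q - Derive f q * (y - q) - k * (y - q)^2).
  set (dh := fun y => Derive f y - Derive f q - 2 * k * (y - q)).
  destruct (Req_dec x q) as [E|E].
  { subst x. exists q; split. split; [apply Rmin_l|apply Rmax_l].
    exists 0; split; [lra|]. ring. }
  destruct (MVT_gen h q x dh) as [c [Hc Heq]].
  - intros y Hy. destruct (Hd y) as [D1 _]. split; apply Rlt_le; apply Hy.
    unfold h, dh. auto_derive; auto. change (fun x0 : R => f x0) with f. ring.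
  - intros y Hy. destruct (Hd y Hy) as [D1 _]. apply cont_pt_of_ex.
    unfold h. auto_derive; auto.
  - assert (Hsub : forall y, Rmin q c <= y <= Rmax q c -> Rmin q x <= y <= Rmax q x).
    { intros y Hy. unfold Rmin, Rmax in *.
      destruct (Rle_dec q x), (Rle_dec q c); lra. }
    destruct (MVT_gen (Derive f) q c (Derive (Derive f))) as [d [Hd2 Heq2]].
    + intros y Hy. apply Derive_correct. apply Hd, Hsub; split; apply Rlt_le; apply Hy.
    + intros y Hy. apply cont_pt_of_ex. apply Hd, Hsub; auto.
    + exists d; split; [apply Hsub; auto|].
      exists ((c - q) * (x - q)). split.
      * unfold Rmin, Rmax in Hc. destruct (Rle_dec q x); nra.
      * unfold h, dh in Heq. simpl in Heq.
        simpl in Heq. replace (Derive f c) with (Derive f q + Derive (Derive f) d * (c - q)) in Heq by lra.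
        replace (f x - f q - Derive f q * (x - q) - k * (x - q) ^ 2) with (f x - f q - Derive f q * (x - q) - k * ((x - q) * ((x - q) * 1)) - (f q - f q - Derive f q * (q - q) - k * ((q - q) * ((q - q) * 1)))) by ring.
        rewrite Heq. ring.
Qed.

Lemma RInt_quad al be ga q a b :
  RInt (fun x => al + be * (x - q) + ga * (x - q)^2) a b =
  al * (b - a) + be * ((b - q)^2 - (a - q)^2) / 2 + ga * ((b - q)^3 - (a - q)^3) / 3.
Proof.
  set (F := fun x => al * x + be * (x - q)^2 / 2 + ga * (x - q)^3 / 3).
  assert (K : is_RInt (fun x => al + be * (x - q) + ga * (x - q)^2) a b (F b - F a)).
  { apply (is_RInt_derive F).
    - intros x _. unfold F. auto_derive; auto. field.
    - intros x _.
      apply (ex_derive_continuous (fun x => al + be * (x - q) + ga * (x - q)^2)). auto_derive; auto. }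
  rewrite (is_RInt_unique _ _ _ _ K). unfold F. simpl. field.
Qed.

Lemma convex_chord (f : R -> R) x1 x2 x : x1 < x2 -> x1 <= x <= x2 ->
  (forall y, x1 <= y <= x2 -> ex_derive f y /\ ex_derive (Derive f) y /\ 0 <= Derive (Derive f) y) ->
  f x <= chord f x1 x2 x.
Proof.
  intros H12 Hx Hd. unfold chord.
  destruct (Req_dec x x1) as [E|E]. { subst. lra. }
  destruct (Req_dec x x2) as [E2|E2].
  { subst. right. field. lra. }
  destruct (mvt f x1 x) as [c1 [Hc1 Eq1]]; [lra| intros y Hy; apply Hd; lra |].
  destruct (mvt f x x2) as [c2 [Hc2 Eq2]]; [lra| intros y Hy; apply Hd; lra |].
  assert (Hs : Derive f c1 <= Derive f c2).
  { destruct (Req_dec c1 c2) as [E3|E3]. { rewrite E3; lra. }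
    destruct (mvt (Derive f) c1 c2) as [d [Hd3 Eq3]]; [lra| intros y Hy; apply Hd; lra |].
    destruct (Hd d) as [_ [_ Hp]]; [lra|]. nra. }
  set (sl := (f x2 - f x1) / (x2 - x1)).
  assert (Hsl : sl * (x2 - x1) = f x2 - f x1) by (unfold sl; field; lra).
  assert (K : (f x - f x1 - sl * (x - x1)) * (x2 - x1) <= 0).
  { replace ((f x - f x1 - sl * (x - x1)) * (x2 - x1)) with
      ((f x - f x1) * (x2 - x1) - (sl * (x2 - x1)) * (x - x1)) by ring.
    rewrite Hsl. replace (f x2 - f x1) with ((f x2 - f x) + (f x - f x1)) by ring.
    rewrite Eq1, Eq2.
    replace (Derive f c1 * (x - x1) * (x2 - x1) -
      (Derive f c2 * (x2 - x) + Derive f c1 * (x - x1)) * (x - x1))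
      with ((x - x1) * (x2 - x) * (Derive f c1 - Derive f c2)) by ring.
    assert (0 <= (x - x1) * (x2 - x)) by nra. nra. }
  assert (f x - f x1 - sl * (x - x1) <= 0) by nra. lra.
Qed.

Lemma ball_R (x e y : R) : ball x e y -> Rabs (y - x) < e.
Proof. unfold ball; simpl; unfold AbsRing_ball, abs, minus, plus, opp; simpl. auto. Qed.

Lemma key lo hi (f : R -> R) a :
  let I := in_open_interval lo hi in
  (forall x, I x -> ex_derive f x) ->
  (forall x, I x -> ex_derive (Derive f) x) ->
  (forall x, I x -> 0 < Derive (Derive f) x) ->
  (forall x, I x -> continuity_pt (Derive (Derive f)) x) ->
  0 < a ->
  (forall p x1 x2 : R, I p -> I x1 -> I x2 -> x1 < x2 ->
      f x2 - f x1 = Derive f p * (x2 - x1) -> x1 <= p <= x2 ->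
      segment_area f x1 x2 = a * sqrt (Rabs (chord f x1 x2 p - f p) ^ 3)) ->
  forall p eps, I p -> 0 < eps < Derive (Derive f) p ->
  a * sqrt ((Derive (Derive f) p - eps) / 2) <= 4/3 /\
  4/3 <= a * sqrt ((Derive (Derive f) p + eps) / 2).
Proof.
  intros I D1 D2 Hpos Hc Ha HA p eps Ip Heps.
  set (m := Derive (Derive f) p) in *.
  destruct (I_open lo hi p Ip) as [dI [HdI HI]].
  destruct (proj1 (continuity_pt_locally _ _) (Hc p Ip) (mkposreal eps (proj1 Heps))) as [dc Hdc].
  set (d0 := Rmin dI dc).
  assert (Hd0 : 0 < d0) by (apply Rmin_pos; [lra| apply cond_pos]).
  set (x1 := p - d0/2). set (x2 := p + d0/2).
  assert (H12 : x1 < x2) by (unfold x1, x2; lra).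
  assert (Hin : forall y, x1 <= y <= x2 -> I y /\ m - eps < Derive (Derive f) y < m + eps).
  { intros y Hy. assert (Rabs (y - p) < d0).
    { apply Rabs_def1; unfold x1, x2 in Hy; lra. }
    split. apply HI. assert (d0 <= dI) by apply Rmin_l. lra.
    assert (Rabs (Derive (Derive f) y - m) < eps).
    { apply (Hdc y). unfold ball; simpl; unfold AbsRing_ball, abs, minus, plus, opp; simpl.
      assert (d0 <= dc) by apply Rmin_r. replace (y + - p) with (y - p) by ring. lra. }
    apply Rabs_def2 in H0. lra. }
  assert (Hder : forall y, x1 <= y <= x2 -> ex_derive f y /\ ex_derive (Derive f) y).
  { intros y Hy. destruct (Hin y Hy) as [Iy _]. auto. }
  destruct (mvt f x1 x2 H12) as [q [Hq Eqq]]; [intros y Hy; apply Hder; auto|].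
  assert (Iq : I q) by (apply Hin; auto).
  assert (Ix1 : I x1) by (apply Hin; lra).
  assert (Ix2 : I x2) by (apply Hin; lra).
  pose proof (HA q x1 x2 Iq Ix1 Ix2 H12 Eqq Hq) as Harea.
  set (t := chord f x1 x2 q - f q) in *.
  set (G := fun y => f y - f q - Derive f q * (y - q)).
  assert (Eq1 : forall y, chord f x1 x2 y - f y = t - G y).
  { intros y. unfold t, G, chord.
    replace ((f x2 - f x1) / (x2 - x1)) with (Derive f q) by (rewrite Eqq; field; lra). ring. }
  assert (Gx1 : G x1 = t).
  { pose proof (Eq1 x1). unfold chord in H. lra. }
  assert (Gx2 : G x2 = t).
  { pose proof (Eq1 x2). unfold chord in H.
    replace ((f x2 - f x1) / (x2 - x1) * (x2 - x1)) with (f x2 - f x1) in H by (field; lra). lra. }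
  set (kk := (m - eps) / 2). set (KK := (m + eps) / 2).
  assert (Hkk : 0 < kk) by (unfold kk; lra).
  assert (HKK : 0 < KK) by (unfold KK; lra).
  assert (Hsub : forall y, x1 <= y <= x2 -> forall z, Rmin q y <= z <= Rmax q y -> x1 <= z <= x2).
  { intros y Hy z Hz. unfold Rmin, Rmax in Hz. destruct (Rle_dec q y); lra. }
  assert (Glow : forall y, x1 <= y <= x2 -> kk * (y - q)^2 <= G y).
  { intros y Hy. destruct (taylor2 f q y kk) as [d [Hd [w [Hw Ew]]]].
    { intros z Hz. apply Hder. apply (Hsub y); auto. }
    destruct (Hin d (Hsub y Hy d Hd)) as [_ Hb].
    unfold G. assert (0 <= (Derive (Derive f) d - 2 * kk) * w).
    { apply Rmult_le_pos; auto. unfold kk; lra. } lra. }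
  assert (Gup : forall y, x1 <= y <= x2 -> G y <= KK * (y - q)^2).
  { intros y Hy. destruct (taylor2 f q y KK) as [d [Hd [w [Hw Ew]]]].
    { intros z Hz. apply Hder. apply (Hsub y); auto. }
    destruct (Hin d (Hsub y Hy d Hd)) as [_ Hb].
    unfold G. assert ((Derive (Derive f) d - 2 * KK) * w <= 0).
    { apply Rmult_le_0_r; auto. unfold KK; lra. } lra. }
  pose proof (Glow x1 ltac:(lra)) as L1. pose proof (Glow x2 ltac:(lra)) as L2.
  pose proof (Gup x1 ltac:(lra)) as U1. pose proof (Gup x2 ltac:(lra)) as U2.
  rewrite Gx1 in L1, U1. rewrite Gx2 in L2, U2.
  assert (Ht : 0 < t).
  { destruct (Rle_dec q p).
    - assert (0 < (x2 - q)^2) by (apply pow_lt; unfold x2 in *; lra). nra.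
    - assert (0 < (x1 - q)^2). { replace ((x1-q)^2) with ((q-x1)^2) by ring. apply pow_lt; unfold x1 in *; lra. } nra. }
  set (s := sqrt t). assert (Hs : 0 < s) by (apply sqrt_lt_R0; auto).
  assert (Hst : s * s = t) by (apply sqrt_sqrt; lra).
  set (w := sqrt kk). assert (Hw : 0 < w) by (apply sqrt_lt_R0; auto).
  assert (Hwk : w * w = kk) by (apply sqrt_sqrt; lra).
  set (W := sqrt KK). assert (HW : 0 < W) by (apply sqrt_lt_R0; auto).
  assert (HWK : W * W = KK) by (apply sqrt_sqrt; lra).
  assert (Hsq : sqrt (Rabs t ^ 3) = s^3).
  { rewrite Rabs_pos_eq by lra. rewrite <- Hst.
    replace ((s*s)^3) with ((s^3)^2) by ring. apply sqrt_pow2. apply pow_le; lra. }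
  fold t in Harea. rewrite Hsq in Harea.
  set (F := fun x => Rabs (chord f x1 x2 x - f x)).
  assert (Fcont : forall z, x1 <= z <= x2 -> continuous F z).
  { intros z Hz. unfold F. apply continuous_Rabs_comp.
    apply (ex_derive_continuous (fun x => chord f x1 x2 x - f x)).
    destruct (Hder z Hz) as [Dz _].
    unfold chord. auto_derive; auto. }
  assert (Fint : forall u v, x1 <= u -> u <= v -> v <= x2 -> ex_RInt F u v).
  { intros u v Hu Huv Hv. apply (@ex_RInt_continuous R_CompleteNormedModule). intros z Hz.
    rewrite Rmin_left in Hz by lra. rewrite Rmax_right in Hz by lra. apply Fcont; lra. }
  assert (Harea' : RInt F x1 x2 = a * s^3) by (rewrite <- Harea; reflexivity).
  split.
  -
    assert (RInt F x1 x2 <= RInt (fun x => t + 0 * (x - q) + (- kk) * (x - q)^2) x1 x2).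
    { apply RInt_le; [lra| apply Fint; lra| |].
      - apply (@ex_RInt_continuous R_CompleteNormedModule). intros z _.
        apply (ex_derive_continuous (fun x => t + 0 * (x - q) + (- kk) * (x - q)^2)). auto_derive; auto.
      - intros x Hx. unfold F. rewrite Rabs_pos_eq.
        + rewrite Eq1. pose proof (Glow x ltac:(lra)). lra.
        + assert (f x <= chord f x1 x2 x).
          { apply convex_chord; try lra. intros y Hy. destruct (Hder y Hy).
            repeat split; auto. destruct (Hin y Hy) as [_ Hb]. lra. }
          lra. }
    rewrite RInt_quad, Harea' in H.
    set (r := s / w).
    assert (Hr : kk * (r * r) = t) by (unfold r; rewrite <- Hst, <- Hwk; field; lra).
    assert (Hr0 : 0 < r) by (unfold r; apply Rdiv_lt_0_compat; lra).
    assert (Ha1 : q - x1 <= r).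
    { destruct (Rle_dec (q-x1) r); auto. exfalso. assert (r*r < (q-x1)*(q-x1)) by nra.
      assert (kk*(r*r) < kk*((q-x1)*(q-x1))) by (apply Rmult_lt_compat_l; lra).
      replace ((x1-q)^2) with ((q-x1)*(q-x1)) in L1 by ring. lra. }
    assert (Ha2 : x2 - q <= r).
    { destruct (Rle_dec (x2-q) r); auto. exfalso. assert (r*r < (x2-q)*(x2-q)) by nra.
      assert (kk*(r*r) < kk*((x2-q)*(x2-q))) by (apply Rmult_lt_compat_l; lra).
      replace ((x2-q)^2) with ((x2-q)*(x2-q)) in L2 by ring. lra. }
    assert (Hqa : 0 <= q - x1) by lra. assert (Hqb : 0 <= x2 - q) by lra.
    assert (P1 : t * (q - x1) - kk * (q - x1)^3 / 3 <= 2/3 * kk * r^3).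
    { rewrite <- Hr. assert (0 <= (r - (q - x1))^2 * (2*r + (q - x1))) by (apply Rmult_le_pos; nra).
      nra. }
    assert (P2 : t * (x2 - q) - kk * (x2 - q)^3 / 3 <= 2/3 * kk * r^3).
    { rewrite <- Hr. assert (0 <= (r - (x2 - q))^2 * (2*r + (x2 - q))) by (apply Rmult_le_pos; nra).
      nra. }
    assert (a * s^3 <= 4/3 * kk * r^3).
    { eapply Rle_trans; [apply H|]. 
      replace ((x1 - q)^3) with (- (q - x1)^3) by ring.
      replace (x2 - x1) with ((x2 - q) + (q - x1)) by ring. lra. }
    assert (E : kk * r^3 = s^3 / w).
    { unfold r. rewrite <- Hwk. field. lra. }
    assert (H0b : a * s^3 <= 4/3 * (s^3/w)) by (rewrite <- E; lra). clear H0. rename H0b into H0.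
    apply (Rmult_le_reg_r (s^3)). apply pow_lt; lra.
    assert (a * w * s^3 = (a * s^3) * w) by ring.
    assert (4/3 * (s^3/w) * w = 4/3 * s^3) by (field; lra).
    nra.
  -
    set (R0 := s / W). assert (Hqa : 0 <= q - x1) by lra. assert (Hqb : 0 <= x2 - q) by lra.
    assert (HR : KK * (R0 * R0) = t) by (unfold R0; rewrite <- Hst, <- HWK; field; lra).
    assert (HR0 : 0 < R0) by (unfold R0; apply Rdiv_lt_0_compat; lra).
    assert (Hb1 : R0 <= q - x1).
    { destruct (Rle_dec R0 (q - x1)); auto. exfalso.
      assert ((q-x1)*(q-x1) < R0*R0) by nra.
      assert (KK*((q-x1)*(q-x1)) < KK*(R0*R0)) by (apply Rmult_lt_compat_l; lra).
      replace ((x1-q)^2) with ((q-x1)*(q-x1)) in U1 by ring. lra. }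
    assert (Hb2 : R0 <= x2 - q).
    { destruct (Rle_dec R0 (x2 - q)); auto. exfalso.
      assert ((x2-q)*(x2-q) < R0*R0) by nra.
      assert (KK*((x2-q)*(x2-q)) < KK*(R0*R0)) by (apply Rmult_lt_compat_l; lra).
      replace ((x2-q)^2) with ((x2-q)*(x2-q)) in U2 by ring. lra. }
    assert (Split : RInt F x1 x2 = RInt F x1 (q - R0) + (RInt F (q - R0) (q + R0) + RInt F (q + R0) x2)).
    { rewrite <- (RInt_Chasles F x1 (q - R0) x2) by (apply Fint; lra).
      rewrite <- (RInt_Chasles F (q - R0) (q + R0) x2) by (apply Fint; lra).
      reflexivity. }
    assert (0 <= RInt F x1 (q - R0)).
    { apply RInt_ge_0; [lra| apply Fint; lra|]. intros; unfold F; apply Rabs_pos. }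
    assert (0 <= RInt F (q + R0) x2).
    { apply RInt_ge_0; [lra| apply Fint; lra|]. intros; unfold F; apply Rabs_pos. }
    assert (RInt (fun x => t + 0 * (x - q) + (- KK) * (x - q)^2) (q - R0) (q + R0) <= RInt F (q - R0) (q + R0)).
    { apply RInt_le; [lra| | apply Fint; lra|].
      - apply (@ex_RInt_continuous R_CompleteNormedModule). intros z _.
        apply (ex_derive_continuous (fun x => t + 0 * (x - q) + (- KK) * (x - q)^2)). auto_derive; auto.
      - intros x Hx. unfold F. rewrite Eq1.
        pose proof (Gup x ltac:(lra)). pose proof (Rle_abs (t - G x)). lra. }
    rewrite RInt_quad in H1.
    assert (E : t * (q + R0 - (q - R0)) + 0 * ((q + R0 - q) ^ 2 - (q - R0 - q) ^ 2) / 2 +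
       - KK * ((q + R0 - q) ^ 3 - (q - R0 - q) ^ 3) / 3 = 4/3 * (s^3 / W)).
    { unfold R0. rewrite <- Hst, <- HWK. field. lra. }
    rewrite E in H1.
    assert (4/3 * (s^3/W) <= a * s^3) by lra.

    apply (Rmult_le_reg_r (s^3)). apply pow_lt; lra.
    assert (4/3 * (s^3/W) * W = 4/3 * s^3) by (field; lra).
    nra.
Qed.

Lemma mvt_d (phi df : R -> R) a b : a < b ->
  (forall y, a <= y <= b -> is_derive phi y (df y)) ->
  exists c, a <= c <= b /\ phi b - phi a = df c * (b - a).
Proof.
  intros Hab Hd.
  destruct (MVT_gen phi a b df) as [c [Hc Heq]].
  - intros x Hx. rewrite Rmin_left in Hx by lra. rewrite Rmax_right in Hx by lra.
    apply Hd; lra.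
  - intros x Hx. rewrite Rmin_left in Hx by lra. rewrite Rmax_right in Hx by lra.
    apply cont_pt_of_ex. exists (df x). apply Hd; lra.
  - rewrite Rmin_left in Hc by lra. rewrite Rmax_right in Hc by lra.
    exists c; auto.
Qed.

Theorem theorem1 (lo hi : Rbar) (f : R -> R) :
  Rbar_lt lo hi ->
  C3_on (in_open_interval lo hi) f ->
  (forall x, in_open_interval lo hi x -> 0 < Derive_n f 2 x) ->
  (quadratic_on (in_open_interval lo hi) f <->
   conditionA (in_open_interval lo hi) f).
Proof.
  intros Hlh [Hdn Hcn] Hpos2.
  set (I := in_open_interval lo hi) in *.
  assert (D1 : forall x, I x -> ex_derive f x) by (intros x Ix; exact (Hdn 1%nat ltac:(lia) x Ix)).
  assert (D2 : forall x, I x -> ex_derive (Derive f) x) by (intros x Ix; exact (Hdn 2%nat ltac:(lia) x Ix)).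
  assert (D3 : forall x, I x -> ex_derive (Derive (Derive f)) x) by (intros x Ix; exact (Hdn 3%nat ltac:(lia) x Ix)).
  assert (Hpos : forall x, I x -> 0 < Derive (Derive f) x) by (intros x Ix; exact (Hpos2 x Ix)).
  assert (Hc : forall x, I x -> continuity_pt (Derive (Derive f)) x) by (intros x Ix; apply cont_pt_of_ex; auto).
  split.
  -
    intros [c2 [c1 [c0 Hq]]].
    assert (Hd1 : forall y, I y -> Derive f y = 2 * c2 * y + c1).
    { intros y Iy. destruct (I_open lo hi y Iy) as [d [Hd HI]].
      rewrite (Derive_ext_loc f (fun x => c2 * x^2 + c1 * x + c0)).
      - apply is_derive_unique. auto_derive; auto. ring.
      - exists (mkposreal d Hd). intros t Ht. apply Hq, HI, ball_R, Ht. }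
    assert (Hd2 : forall y, I y -> Derive (Derive f) y = 2 * c2).
    { intros y Iy. destruct (I_open lo hi y Iy) as [d [Hd HI]].
      rewrite (Derive_ext_loc (Derive f) (fun x => 2 * c2 * x + c1)).
      - apply is_derive_unique. auto_derive; auto. ring.
      - exists (mkposreal d Hd). intros t Ht. apply Hd1, HI, ball_R, Ht. }
    destruct (classic (exists x0, I x0)) as [[x0 Ix0]|NE].
    2:{ exists 1; split; [lra|]. intros p x1 x2 Ip. exfalso; apply NE; eauto. }
    assert (Hc2 : 0 < c2) by (pose proof (Hpos x0 Ix0); rewrite Hd2 in H by auto; lra).
    set (sc := sqrt c2). assert (Hsc : 0 < sc) by (apply sqrt_lt_R0; auto).
    assert (Hsc2 : sc * sc = c2) by (apply sqrt_sqrt; lra).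
    exists (4 / (3 * sc)). split. { apply Rdiv_lt_0_compat; lra. }
    intros p x1 x2 Ip Ix1 Ix2 H12 Hsl Hp.
    rewrite Hd1 in Hsl by auto. rewrite !Hq in Hsl by auto.
    assert (Ep : p = (x1 + x2) / 2).
    { assert (E : (x2 - x1) * (c2 * (x1 + x2 - 2 * p)) = 0) by nra.
      apply Rmult_integral in E. destruct E as [E|E]; [lra|].
      apply Rmult_integral in E. destruct E; lra. }
    set (h := (x2 - x1) / 2). assert (Hh : 0 < h) by (unfold h; lra).
    assert (Hch : forall x, x1 <= x <= x2 -> chord f x1 x2 x - f x = c2 * h^2 + 0 * (x - p) + (- c2) * (x - p)^2).
    { intros x Hx. unfold chord. rewrite !Hq; auto.
      2:{ apply (I_conv lo hi x1 x2); auto. }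
      rewrite Ep. unfold h. field. lra. }
    unfold segment_area.
    rewrite (RInt_ext _ (fun x => c2 * h^2 + 0 * (x - p) + (- c2) * (x - p)^2)).
    2:{ intros x Hx. rewrite Rmin_left in Hx by lra. rewrite Rmax_right in Hx by lra.
        rewrite Hch by lra. apply Rabs_pos_eq.
        assert ((x - p)^2 <= h^2).
        { rewrite Ep in *. unfold h. nra. }
        nra. }
    rewrite RInt_quad. rewrite Hch by lra.
    replace (c2 * h ^ 2 + 0 * (p - p) + - c2 * (p - p) ^ 2) with ((sc * h)^2) by (rewrite <- Hsc2; ring).
    rewrite Rabs_pos_eq by (apply pow_le; nra).
    replace (((sc * h) ^ 2) ^ 3) with (((sc * h)^3)^2) by ring.
    rewrite sqrt_pow2 by (apply pow_le; nra).
    replace (x2 - x1) with (2 * h) by (unfold h; field).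
    replace (x2 - p) with h by (rewrite Ep; unfold h; field).
    replace (x1 - p) with (- h) by (rewrite Ep; unfold h; field).
    rewrite <- Hsc2. field. lra.
  -
    intros [a [Ha HA]].
    set (c := 4 / (3 * a)). assert (Hc0 : 0 < c) by (unfold c; apply Rdiv_lt_0_compat; lra).
    assert (Hac : a * c = 4/3) by (unfold c; field; lra).
    set (M := 2 * (c * c)).
    assert (HM : forall p, I p -> Derive (Derive f) p = M).
    { intros p Ip. pose proof (Hpos p Ip) as Hm.
      pose proof (key lo hi f a D1 D2 Hpos Hc Ha HA p) as K.
      set (m := Derive (Derive f) p) in *.
      destruct (Rtotal_order m M) as [Lt|[Eq|Gt]]; auto; exfalso.
      - set (e := Rmin ((M - m)/2) (m/2)).
        assert (He : 0 < e) by (apply Rmin_pos; unfold M in *; lra).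
        assert (He1 : e <= (M - m)/2) by apply Rmin_l.
        assert (He2 : e <= m/2) by apply Rmin_r.
        destruct (K e Ip ltac:(lra)) as [_ K2].
        assert (sqrt ((m + e)/2) < sqrt (c * c)).
        { apply sqrt_lt_1_alt. unfold M in *; lra. }
        rewrite sqrt_square in H by lra.
        assert (a * sqrt ((m + e)/2) < a * c) by (apply Rmult_lt_compat_l; lra). lra.
      - set (e := (m - M)/2).
        assert (He : 0 < e) by (unfold e; lra).
        destruct (K e Ip ltac:(unfold e, M in *; nra)) as [K1 _].
        assert (sqrt (c * c) < sqrt ((m - e)/2)).
        { apply sqrt_lt_1_alt. unfold e, M in *; nra. }
        rewrite sqrt_square in H by lra.
        assert (a * c < a * sqrt ((m - e)/2)) by (apply Rmult_lt_compat_l; lra). lra. }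
    destruct (classic (exists x0, I x0)) as [[x0 Ix0]|NE].
    2:{ exists 0, 0, 0. intros x Ix. exfalso; apply NE; eauto. }
    set (B := Derive f x0 - M * x0).
    assert (Step1 : forall u v, I u -> I v -> u < v -> Derive f v - Derive f u = M * (v - u)).
    { intros u v Iu Iv Huv.
      destruct (mvt_d (Derive f) (Derive (Derive f)) u v Huv) as [d [Hd E]].
      - intros y Hy. apply Derive_correct, D2, (I_conv lo hi u v); auto.
      - rewrite E, HM; auto. apply (I_conv lo hi u v); auto. }
    assert (Hd1 : forall x, I x -> Derive f x = M * x + B).
    { intros x Ix. unfold B. destruct (Rtotal_order x x0) as [L|[E|L]].
      - pose proof (Step1 x x0 Ix Ix0 L). lra.
      - subst; ring.
      - pose proof (Step1 x0 x Ix0 Ix L). lra. }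
    set (phi := fun y => f y - M / 2 * y^2 - B * y).
    assert (Step2 : forall u v, I u -> I v -> u < v -> phi v = phi u).
    { intros u v Iu Iv Huv.
      destruct (mvt_d phi (fun _ => 0) u v Huv) as [d [Hd E]].
      - intros y Hy. assert (Iy : I y) by (apply (I_conv lo hi u v); auto).
        unfold phi. pose proof (D1 y Iy) as Dy. auto_derive; auto.
        rewrite Hd1 by auto. change (fun x : R => f x) with f. field.
      - lra. }
    exists (M / 2), B, (phi x0). intros x Ix.
    assert (Hph : phi x = phi x0).
    { destruct (Rtotal_order x x0) as [L|[E|L]].
      - symmetry; apply Step2; auto.
      - subst; auto.
      - apply Step2; auto. }
    unfold phi in *. lra.
Qed.
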